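(* There is a constant $C>0$ with the following property. For every unital C*-algebra $A$, every $n\ge1$, every $\lambda>0$ and every $\lambda$-Lipschitz map $\alpha_0\colon S^{n-1}\to U(A)$ with $\operatorname{diam}\alpha_0(S^{n-1})\le\frac12$, there is an extension $\alpha\colon D^n\to U(A)$ of $\alpha_0$ which is $C\lambda$-Lipschitz. The constant $C$ depends neither on $A$ nor on $n$.
   Context: $U(A)=\{u\in A:u^*u=uu^*=1\}$, metrized by the norm of $A$; $S^{n-1}\subset D^n\subset\mathbb R^n$ carry the Euclidean metric. *)

(* Defs.v *)
From Stdlib Require Import Reals.
Open Scope R_scope.

Record Cplx := mkC { Cre : R; Cim : R }.
Definition C0 : Cplx := mkC 0 0.
Definition C1 : Cplx := mkC 1 0.
Definition Cadd (a b : Cplx) : Cplx := mkC (Cre a + Cre b) (Cim a + Cim b).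
Definition Cmul (a b : Cplx) : Cplx :=
  mkC (Cre a * Cre b - Cim a * Cim b) (Cre a * Cim b + Cim a * Cre b).
Definition Cconj (a : Cplx) : Cplx := mkC (Cre a) (- Cim a).
Definition Cmod (a : Cplx) : R := sqrt (Cre a ^ 2 + Cim a ^ 2).

Record CStarAlg := {
  car :> Type;
  cadd : car -> car -> car;
  czero : car;
  copp : car -> car;
  cscal : Cplx -> car -> car;
  cmul : car -> car -> car;
  cone : car;
  cstar : car -> car;
  cnorm : car -> R;
  cadd_assoc : forall x y z, cadd x (cadd y z) = cadd (cadd x y) z;
  cadd_comm : forall x y, cadd x y = cadd y x;
  cadd_0 : forall x, cadd czero x = x;
  cadd_opp : forall x, cadd x (copp x) = czero;
  cscal_addr : forall a x y, cscal a (cadd x y) = cadd (cscal a x) (cscal a y);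
  cscal_addl : forall a b x, cscal (Cadd a b) x = cadd (cscal a x) (cscal b x);
  cscal_mul : forall a b x, cscal (Cmul a b) x = cscal a (cscal b x);
  cscal_1 : forall x, cscal C1 x = x;
  cmul_assoc : forall x y z, cmul x (cmul y z) = cmul (cmul x y) z;
  cmul_addl : forall x y z, cmul (cadd x y) z = cadd (cmul x z) (cmul y z);
  cmul_addr : forall x y z, cmul x (cadd y z) = cadd (cmul x y) (cmul x z);
  cmul_scall : forall a x y, cmul (cscal a x) y = cscal a (cmul x y);
  cmul_scalr : forall a x y, cmul x (cscal a y) = cscal a (cmul x y);
  cmul_1l : forall x, cmul cone x = x;
  cmul_1r : forall x, cmul x cone = x;
  cnorm_eq0 : forall x, cnorm x = 0 -> x = czero;
  cnorm_scal : forall a x, cnorm (cscal a x) = Cmod a * cnorm x;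
  cnorm_triangle : forall x y, cnorm (cadd x y) <= cnorm x + cnorm y;
  cnorm_submult : forall x y, cnorm (cmul x y) <= cnorm x * cnorm y;
  ccomplete : forall u : nat -> car,
    (forall eps, 0 < eps -> exists N, forall m k, (N <= m)%nat -> (N <= k)%nat ->
        cnorm (cadd (u m) (copp (u k))) < eps) ->
    exists l, forall eps, 0 < eps -> exists N, forall m, (N <= m)%nat ->
        cnorm (cadd (u m) (copp l)) < eps;
  cstar_invol : forall x, cstar (cstar x) = x;
  cstar_add : forall x y, cstar (cadd x y) = cadd (cstar x) (cstar y);
  cstar_scal : forall a x, cstar (cscal a x) = cscal (Cconj a) (cstar x);
  cstar_mul : forall x y, cstar (cmul x y) = cmul (cstar y) (cstar x);
  cstar_identity : forall x, cnorm (cmul (cstar x) x) = cnorm x ^ 2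
}.

Definition cdist (A : CStarAlg) (x y : A) : R := cnorm A (cadd A x (copp A y)).

Definition unitary (A : CStarAlg) (u : A) : Prop :=
  cmul A (cstar A u) u = cone A /\ cmul A u (cstar A u) = cone A.

(** * Euclidean space R^n: points are x : nat -> R, only coordinates
    0..n-1 are used. *)
Fixpoint sumsq (n : nat) (x : nat -> R) : R :=
  match n with
  | O => 0
  | S m => sumsq m x + x m ^ 2
  end.

Definition edist (n : nat) (x y : nat -> R) : R :=
  sqrt (sumsq n (fun i => x i - y i)).

Definition in_sphere (n : nat) (x : nat -> R) : Prop := sumsq n x = 1.
Definition in_disk (n : nat) (x : nat -> R) : Prop := sumsq n x <= 1.

(* Main.v *)
Require Import Defs.
From Stdlib Require Import Reals Lra Lia Psatz ClassicalEpsilon FunctionalExtensionality.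
Open Scope R_scope.

Local Notation "x '⊕' y" := (cadd _ x y) (at level 50, left associativity).
Local Notation "x '⊗' y" := (cmul _ x y) (at level 40, left associativity).
Local Notation "'⊖' x" := (copp _ x) (at level 35, right associativity).
Local Notation "N[ x ]" := (cnorm _ x) (at level 0, x at level 99).

Lemma addr0 (A : CStarAlg) (x : A) : x ⊕ czero A = x.
Proof. rewrite cadd_comm. apply cadd_0. Qed.
Lemma addNr (A : CStarAlg) (x : A) : (⊖ x) ⊕ x = czero A.
Proof. rewrite cadd_comm. apply cadd_opp. Qed.
Lemma addr_cancel (A : CStarAlg) (x y z : A) : x ⊕ z = y ⊕ z -> x = y.
Proof.
  intro H. rewrite <- (addr0 A x), <- (addr0 A y), <- (cadd_opp A z).
  rewrite !cadd_assoc, H. reflexivity.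
Qed.
Lemma opp_unique (A : CStarAlg) (x y : A) : x ⊕ y = czero A -> y = ⊖ x.
Proof.
  intro H. apply (addr_cancel A _ _ x). rewrite addNr, cadd_comm. exact H.
Qed.
Lemma oppK (A : CStarAlg) (x : A) : ⊖ (⊖ x) = x.
Proof. symmetry. apply opp_unique. apply addNr. Qed.
Lemma opp_inj (A : CStarAlg) (x y : A) : ⊖ x = ⊖ y -> x = y.
Proof. intro H. rewrite <- (oppK A x), H. apply oppK. Qed.
Lemma addKr (A : CStarAlg) (x y : A) : (x ⊕ y) ⊕ ⊖ y = x.
Proof. rewrite <- cadd_assoc, cadd_opp. apply addr0. Qed.
Lemma addNKr (A : CStarAlg) (x y : A) : (x ⊕ ⊖ y) ⊕ y = x.
Proof. rewrite <- cadd_assoc, addNr. apply addr0. Qed.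
Lemma subr_eq0 (A : CStarAlg) (x y : A) : x ⊕ ⊖ y = czero A -> x = y.
Proof. intro H. rewrite <- (addNKr A x y), H. apply cadd_0. Qed.
Lemma subrr (A : CStarAlg) (x : A) : x ⊕ ⊖ x = czero A.
Proof. apply cadd_opp. Qed.
Lemma self_add_eq (A : CStarAlg) (x : A) : x ⊕ x = x -> x = czero A.
Proof. intro H. apply (addr_cancel A _ _ x). rewrite cadd_0. exact H. Qed.
Lemma mul0r (A : CStarAlg) (x : A) : czero A ⊗ x = czero A.
Proof. apply self_add_eq. rewrite <- cmul_addl, cadd_0. reflexivity. Qed.
Lemma mulr0 (A : CStarAlg) (x : A) : x ⊗ czero A = czero A.
Proof. apply self_add_eq. rewrite <- cmul_addr, cadd_0. reflexivity. Qed.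
Lemma mulNr (A : CStarAlg) (x y : A) : (⊖ x) ⊗ y = ⊖ (x ⊗ y).
Proof. apply opp_unique. rewrite <- cmul_addl, cadd_opp. apply mul0r. Qed.
Lemma mulrN (A : CStarAlg) (x y : A) : x ⊗ (⊖ y) = ⊖ (x ⊗ y).
Proof. apply opp_unique. rewrite <- cmul_addr, cadd_opp. apply mulr0. Qed.
Lemma oppD (A : CStarAlg) (x y : A) : ⊖ (x ⊕ y) = (⊖ x) ⊕ (⊖ y).
Proof.
  symmetry. apply opp_unique.
  rewrite (cadd_comm A (⊖ x)), cadd_assoc, addKr. apply cadd_opp.
Qed.
Lemma opp0 (A : CStarAlg) : ⊖ (czero A) = czero A.
Proof. symmetry. apply opp_unique. apply cadd_0. Qed.
Lemma mul_subl (A : CStarAlg) (x y z : A) : (x ⊕ ⊖ y) ⊗ z = x ⊗ z ⊕ ⊖ (y ⊗ z).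
Proof. rewrite cmul_addl, mulNr. reflexivity. Qed.
Lemma mul_subr (A : CStarAlg) (x y z : A) : z ⊗ (x ⊕ ⊖ y) = z ⊗ x ⊕ ⊖ (z ⊗ y).
Proof. rewrite cmul_addr, mulrN. reflexivity. Qed.
Lemma sub_add_sub (A : CStarAlg) (x y z : A) : (x ⊕ ⊖ y) ⊕ (y ⊕ ⊖ z) = x ⊕ ⊖ z.
Proof. rewrite cadd_assoc, addNKr. reflexivity. Qed.
Lemma oppB (A : CStarAlg) (x y : A) : ⊖ (x ⊕ ⊖ y) = y ⊕ ⊖ x.
Proof. rewrite oppD, oppK, cadd_comm. reflexivity. Qed.
Lemma sub_sub_same (A : CStarAlg) (x y z : A) : (x ⊕ y) ⊕ ⊖ (x ⊕ z) = y ⊕ ⊖ z.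
Proof.
  rewrite oppD, (cadd_comm A (⊖ x)), cadd_assoc, <- (cadd_assoc A x y), (cadd_comm A x (y ⊕ _)), <- cadd_assoc, <- (cadd_assoc A y), cadd_opp, addr0. reflexivity.
Qed.
Lemma star1 (A : CStarAlg) : cstar A (cone A) = cone A.
Proof.
  assert (H : cstar A (cone A ⊗ cstar A (cone A)) = cstar A (cstar A (cone A))) by (rewrite cmul_1l; reflexivity).
  rewrite cstar_mul, !cstar_invol, cmul_1l in H. exact H.
Qed.
Lemma star0 (A : CStarAlg) : cstar A (czero A) = czero A.
Proof. apply self_add_eq. rewrite <- cstar_add, cadd_0. reflexivity. Qed.
Lemma starN (A : CStarAlg) (x : A) : cstar A (⊖ x) = ⊖ (cstar A x).
Proof. apply opp_unique. rewrite <- cstar_add, cadd_opp. apply star0. Qed.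
Lemma addKl (A : CStarAlg) (x y : A) : (x ⊕ y) ⊕ ⊖ x = y.
Proof. rewrite (cadd_comm A x y). apply addKr. Qed.
Definition rs (a : R) : Cplx := mkC a 0.
Definition sc (A : CStarAlg) (a : R) (x : A) : A := cscal A (rs a) x.

Lemma sc_addl (A : CStarAlg) (a b : R) (x : A) : sc A a x ⊕ sc A b x = sc A (a + b) x.
Proof.
  unfold sc. rewrite <- cscal_addl. f_equal. unfold Cadd, rs; simpl. f_equal; ring.
Qed.
Lemma sc_1 (A : CStarAlg) (x : A) : sc A 1 x = x.
Proof. apply cscal_1. Qed.
Lemma sc_mul (A : CStarAlg) (a b : R) (x : A) : sc A a (sc A b x) = sc A (a * b) x.
Proof.
  unfold sc. rewrite <- cscal_mul. f_equal. unfold Cmul, rs; simpl. f_equal; ring.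
Qed.
Lemma Cmod_rs (a : R) : Cmod (rs a) = Rabs a.
Proof.
  unfold Cmod, rs; cbn [Cre Cim]. replace (a ^ 2 + 0 ^ 2) with (Rsqr a) by (unfold Rsqr; ring).
  apply sqrt_Rsqr_abs.
Qed.
Lemma norm_sc (A : CStarAlg) (a : R) (x : A) : N[ sc A a x ] = Rabs a * N[ x ].
Proof. unfold sc. rewrite cnorm_scal, Cmod_rs. reflexivity. Qed.
Lemma sc_0 (A : CStarAlg) (x : A) : sc A 0 x = czero A.
Proof. apply cnorm_eq0. rewrite norm_sc, Rabs_R0. ring. Qed.
Lemma norm0 (A : CStarAlg) : N[ czero A ] = 0.
Proof. rewrite <- (sc_0 A (czero A)), norm_sc, Rabs_R0. ring. Qed.
Lemma sc_N1 (A : CStarAlg) (x : A) : sc A (-1) x = ⊖ x.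
Proof. apply opp_unique. rewrite <- (sc_1 A x) at 1. rewrite sc_addl.
  replace (1 + -1) with 0 by ring. apply sc_0. Qed.
Lemma normN (A : CStarAlg) (x : A) : N[ ⊖ x ] = N[ x ].
Proof. rewrite <- sc_N1, norm_sc. rewrite Rabs_left by lra. ring. Qed.
Lemma norm_ge0 (A : CStarAlg) (x : A) : 0 <= N[ x ].
Proof.
  pose proof (cnorm_triangle A x (⊖ x)) as H. rewrite cadd_opp, norm0, normN in H. lra.
Qed.
Lemma norm_subC (A : CStarAlg) (x y : A) : N[ x ⊕ ⊖ y ] = N[ y ⊕ ⊖ x ].
Proof. rewrite <- oppB, normN. reflexivity. Qed.
Lemma norm_sub_tri (A : CStarAlg) (x y z : A) :
  N[ x ⊕ ⊖ z ] <= N[ x ⊕ ⊖ y ] + N[ y ⊕ ⊖ z ].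
Proof. rewrite <- (sub_add_sub A x y z). apply cnorm_triangle. Qed.
Lemma norm_mul3 (A : CStarAlg) (x y z : A) : N[ x ⊗ y ⊗ z ] <= N[ x ] * N[ y ] * N[ z ].
Proof.
  eapply Rle_trans. apply cnorm_submult. apply Rmult_le_compat_r. apply norm_ge0.
  apply cnorm_submult.
Qed.
Lemma norm_double (A : CStarAlg) (x : A) : N[ x ⊕ x ] = 2 * N[ x ].
Proof. rewrite <- (sc_1 A x), sc_addl, norm_sc, sc_1. rewrite Rabs_pos_eq by lra. ring_simplify (1+1). ring. Qed.
Lemma norm1 (A : CStarAlg) : N[ cone A ] <= 1.
Proof.
  pose proof (cstar_identity A (cone A)) as H. rewrite star1, cmul_1l in H.
  pose proof (norm_ge0 A (cone A)). nra.
Qed.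
Lemma norm_unitary (A : CStarAlg) (u : A) : unitary A u -> N[ u ] <= 1 /\ N[ cstar A u ] <= 1.
Proof.
  intros [H1 H2]. pose proof (cstar_identity A u) as E1. pose proof (cstar_identity A (cstar A u)) as E2.
  rewrite cstar_invol in E2. rewrite H1 in E1. rewrite H2 in E2.
  pose proof (norm1 A). pose proof (norm_ge0 A u). pose proof (norm_ge0 A (cstar A u)). split; nra.
Qed.
Lemma sc_star (A : CStarAlg) (a : R) (x : A) : cstar A (sc A a x) = sc A a (cstar A x).
Proof. unfold sc. rewrite cstar_scal. f_equal. unfold Cconj, rs; simpl. f_equal; ring. Qed.
Lemma sc_zero (A : CStarAlg) (a : R) : sc A a (czero A) = czero A.
Proof. apply cnorm_eq0. rewrite norm_sc, norm0. ring. Qed.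
Lemma sc_opp (A : CStarAlg) (a : R) (x : A) : sc A a (⊖ x) = ⊖ (sc A a x).
Proof. apply opp_unique. unfold sc. rewrite <- cscal_addr, cadd_opp. apply sc_zero. Qed.
Lemma sc_sub (A : CStarAlg) (a : R) (x y : A) : sc A a (x ⊕ ⊖ y) = sc A a x ⊕ ⊖ sc A a y.
Proof. unfold sc at 1. rewrite cscal_addr. fold (sc A a x). fold (sc A a (⊖ y)). rewrite sc_opp. reflexivity. Qed.
Lemma sc_mull (A : CStarAlg) (a : R) (x y : A) : sc A a x ⊗ y = sc A a (x ⊗ y).
Proof. apply cmul_scall. Qed.
Lemma sc_mulr (A : CStarAlg) (a : R) (x y : A) : x ⊗ sc A a y = sc A a (x ⊗ y).
Proof. apply cmul_scalr. Qed.
Lemma norm_zero_le (t : R) : 0 <= t -> (forall eps, 0 < eps -> t <= eps) -> t = 0.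
Proof.
  intros H0 H. destruct (Rle_lt_or_eq_dec 0 t H0) as [Hp|Hz]; [|auto].
  specialize (H (t/2) ltac:(lra)). lra.
Qed.
Definition invertible (A : CStarAlg) (x : A) : Prop :=
  exists y, x ⊗ y = cone A /\ y ⊗ x = cone A.
Definition inv (A : CStarAlg) (x : A) : A :=
  epsilon (inhabits (czero A)) (fun y => x ⊗ y = cone A /\ y ⊗ x = cone A).
Lemma inv_spec (A : CStarAlg) (x : A) : invertible A x ->
  x ⊗ inv A x = cone A /\ inv A x ⊗ x = cone A.
Proof. intro H. unfold inv. apply epsilon_spec. exact H. Qed.
Lemma inv_uniq (A : CStarAlg) (l x r : A) : l ⊗ x = cone A -> x ⊗ r = cone A -> l = r.
Proof.
  intros H1 H2. rewrite <- (cmul_1r A l), <- H2, cmul_assoc, H1, cmul_1l. reflexivity.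
Qed.

Fixpoint pw (A : CStarAlg) (a : A) (m : nat) : A :=
  match m with O => cone A | S m' => a ⊗ pw A a m' end.
Fixpoint psum (A : CStarAlg) (a : A) (m : nat) : A :=
  match m with O => czero A | S m' => psum A a m' ⊕ pw A a m' end.

Lemma pw_comm (A : CStarAlg) (a : A) m : a ⊗ pw A a m = pw A a m ⊗ a.
Proof.
  induction m; simpl. rewrite cmul_1l, cmul_1r. reflexivity.
  rewrite <- cmul_assoc, <- IHm. reflexivity.
Qed.
Lemma pw_norm (A : CStarAlg) (a : A) m : N[pw A a m] <= N[a] ^ m.
Proof.
  induction m; simpl. apply norm1.
  eapply Rle_trans. apply cnorm_submult. apply Rmult_le_compat_l. apply norm_ge0. exact IHm.
Qed.
Lemma psum_left (A : CStarAlg) (a : A) m :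
  (cone A ⊕ ⊖ a) ⊗ psum A a m = cone A ⊕ ⊖ pw A a m.
Proof.
  induction m; simpl.
  - rewrite mulr0. symmetry. apply cadd_opp.
  - rewrite cmul_addr, IHm, mul_subl, cmul_1l, sub_add_sub. reflexivity.
Qed.
Lemma psum_right (A : CStarAlg) (a : A) m :
  psum A a m ⊗ (cone A ⊕ ⊖ a) = cone A ⊕ ⊖ pw A a m.
Proof.
  induction m; simpl.
  - rewrite mul0r. symmetry. apply cadd_opp.
  - rewrite cmul_addl, IHm, mul_subr, cmul_1r, sub_add_sub, pw_comm. reflexivity.
Qed.
Lemma psum_diff (A : CStarAlg) (a : A) k j :
  N[a] < 1 -> N[psum A a (j + k) ⊕ ⊖ psum A a k] <= N[a] ^ k * (1 - N[a] ^ j) / (1 - N[a]).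
Proof.
  intro Hq. pose proof (norm_ge0 A a) as Hq0. induction j.
  - simpl. rewrite cadd_opp, norm0. simpl. apply Req_le. field. lra.
  - simpl (S j + k)%nat. simpl psum.
    assert (E : psum A a (j + k) ⊕ pw A a (j + k) ⊕ ⊖ psum A a k =
                (psum A a (j + k) ⊕ ⊖ psum A a k) ⊕ pw A a (j + k)).
    { rewrite <- !cadd_assoc. f_equal. apply cadd_comm. }
    rewrite E. eapply Rle_trans. apply cnorm_triangle.
    eapply Rle_trans. apply Rplus_le_compat. exact IHj. apply pw_norm.
    rewrite pow_add. apply Req_le. simpl. field. lra.
Qed.
Lemma psum_cauchy (A : CStarAlg) (a : A) k m :
  N[a] < 1 -> (k <= m)%nat -> N[psum A a m ⊕ ⊖ psum A a k] <= N[a] ^ k / (1 - N[a]).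
Proof.
  intros Hq Hkm. pose proof (norm_ge0 A a) as Hq0.
  replace m with ((m - k) + k)%nat by lia.
  eapply Rle_trans. apply psum_diff; auto.
  assert (0 <= N[a] ^ (m - k)) by (apply pow_le; auto).
  assert (0 <= N[a] ^ k) by (apply pow_le; auto).
  unfold Rdiv. apply Rmult_le_compat_r. apply Rlt_le, Rinv_0_lt_compat. lra. nra.
Qed.
Lemma neumann (A : CStarAlg) (a : A) : N[a] < 1 -> invertible A (cone A ⊕ ⊖ a).
Proof.
  intro Hq. pose proof (norm_ge0 A a) as Hq0. set (q := N[a]) in *.
  assert (Hc : forall eps, 0 < eps -> exists N, forall m k, (N <= m)%nat -> (N <= k)%nat ->
     N[psum A a m ⊕ ⊖ psum A a k] < eps).
  { intros eps He.
    destruct (pow_lt_1_zero q ltac:(rewrite Rabs_pos_eq; lra) (eps * (1 - q)) ltac:(nra)) as [N HN].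
    exists N. intros m k Hm Hk.
    assert (Hgen : forall m k, (N <= k)%nat -> (k <= m)%nat -> N[psum A a m ⊕ ⊖ psum A a k] < eps).
    { intros m' k' Hk' Hkm. eapply Rle_lt_trans. apply psum_cauchy; auto.
      specialize (HN k' Hk'). rewrite Rabs_pos_eq in HN by (apply pow_le; auto).
      fold q. apply (Rmult_lt_reg_r (1 - q)). lra. replace (q ^ k' / (1 - q) * (1 - q)) with (q ^ k') by (field; lra). lra. }
    destruct (Nat.le_ge_cases k m).
    - apply Hgen; auto.
    - rewrite norm_subC. apply Hgen; auto. }
  destruct (ccomplete A (psum A a) Hc) as [l Hl].
  assert (Hlim : forall eps, 0 < eps -> exists N, N[psum A a N ⊕ ⊖ l] < eps /\ q ^ N < eps).
  { intros eps He. destruct (Hl eps He) as [N1 HN1].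
    destruct (pow_lt_1_zero q ltac:(rewrite Rabs_pos_eq; lra) eps He) as [N2 HN2].
    exists (N1 + N2)%nat. split. apply HN1. lia.
    specialize (HN2 (N1 + N2)%nat ltac:(lia)). rewrite Rabs_pos_eq in HN2 by (apply pow_le; auto). exact HN2. }
  exists l. split.
  - apply subr_eq0, cnorm_eq0. apply norm_zero_le. apply norm_ge0.
    intros eps He. destruct (Hlim (eps / 3) ltac:(lra)) as [N [H1 H2]].
    set (x := cone A ⊕ ⊖ a).
    assert (E : x ⊗ l ⊕ ⊖ cone A = x ⊗ (l ⊕ ⊖ psum A a N) ⊕ (x ⊗ psum A a N ⊕ ⊖ cone A)).
    { rewrite mul_subr, sub_add_sub. reflexivity. }
    rewrite E. eapply Rle_trans. apply cnorm_triangle.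
    unfold x at 2. rewrite psum_left. rewrite addKl, normN.
    eapply Rle_trans. apply Rplus_le_compat. apply cnorm_submult. apply pw_norm.
    assert (N[x] <= 2). { unfold x. eapply Rle_trans. apply cnorm_triangle. rewrite normN. pose proof (norm1 A). fold q. lra. }
    rewrite norm_subC in H1. pose proof (norm_ge0 A (l ⊕ ⊖ psum A a N)). fold q. nra.
  - apply subr_eq0, cnorm_eq0. apply norm_zero_le. apply norm_ge0.
    intros eps He. destruct (Hlim (eps / 3) ltac:(lra)) as [N [H1 H2]].
    set (x := cone A ⊕ ⊖ a).
    assert (E : l ⊗ x ⊕ ⊖ cone A = (l ⊕ ⊖ psum A a N) ⊗ x ⊕ (psum A a N ⊗ x ⊕ ⊖ cone A)).
    { rewrite mul_subl, sub_add_sub. reflexivity. }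
    rewrite E. eapply Rle_trans. apply cnorm_triangle.
    unfold x at 2. rewrite psum_right. rewrite addKl, normN.
    eapply Rle_trans. apply Rplus_le_compat. apply cnorm_submult. apply pw_norm.
    assert (N[x] <= 2). { unfold x. eapply Rle_trans. apply cnorm_triangle. rewrite normN. pose proof (norm1 A). fold q. lra. }
    rewrite norm_subC in H1. pose proof (norm_ge0 A (l ⊕ ⊖ psum A a N)). fold q. nra.
Qed.
Lemma add_left_cancel (A : CStarAlg) (x y z : A) : z ⊕ x = z ⊕ y -> x = y.
Proof. intro H. apply (addr_cancel A _ _ z). rewrite (cadd_comm A x), (cadd_comm A y). exact H. Qed.
Lemma comm_inv (A : CStarAlg) (b Z : A) :
  (cone A ⊕ b) ⊗ Z = cone A -> Z ⊗ (cone A ⊕ b) = cone A -> b ⊗ Z = Z ⊗ b.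
Proof.
  intros H1 H2. rewrite cmul_addl, cmul_1l in H1. rewrite cmul_addr, cmul_1r in H2.
  apply (add_left_cancel A _ _ Z). rewrite H1, H2. reflexivity.
Qed.
Lemma inv_diff (A : CStarAlg) (P Q X Y : A) :
  P ⊗ X = cone A -> Y ⊗ Q = cone A -> P ⊕ ⊖ Q = P ⊗ (Y ⊕ ⊖ X) ⊗ Q.
Proof.
  intros H1 H2. rewrite mul_subr, mul_subl, <- !cmul_assoc, H2, cmul_assoc, H1, cmul_1r, cmul_1l.
  reflexivity.
Qed.
Lemma sub_sub_cancel (A : CStarAlg) (x y : A) : x ⊕ ⊖ (x ⊕ ⊖ y) = y.
Proof. rewrite oppB, cadd_comm. apply addNKr. Qed.
Lemma sub_eq_swap (A : CStarAlg) (x y z : A) : x ⊕ ⊖ y = z -> y = x ⊕ ⊖ z.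
Proof. intro H. rewrite <- H, sub_sub_cancel. reflexivity. Qed.
Lemma add4 (A : CStarAlg) (a b c d : A) : (a ⊕ b) ⊕ (c ⊕ d) = (a ⊕ c) ⊕ (b ⊕ d).
Proof.
  rewrite <- !cadd_assoc. f_equal. rewrite !cadd_assoc. f_equal. apply cadd_comm.
Qed.
Lemma sub_double (A : CStarAlg) (P Q : A) : (P ⊕ P) ⊕ ⊖ (Q ⊕ Q) = (P ⊕ ⊖ Q) ⊕ (P ⊕ ⊖ Q).
Proof. rewrite oppD. apply add4. Qed.
Lemma sub_sub_same_r (A : CStarAlg) (x y z : A) : (x ⊕ z) ⊕ ⊖ (y ⊕ z) = x ⊕ ⊖ y.
Proof. rewrite (cadd_comm A x), (cadd_comm A y). apply sub_sub_same. Qed.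
Lemma mul4 (A : CStarAlg) (x y z t : A) : (x ⊗ y) ⊗ (z ⊗ t) = x ⊗ ((y ⊗ z) ⊗ t).
Proof. rewrite !cmul_assoc. reflexivity. Qed.

Definition cay (A : CStarAlg) (a : A) : A := (cone A ⊕ a) ⊗ inv A (cone A ⊕ ⊖ a).

Lemma inv_1m (A : CStarAlg) (a : A) : N[a] <= 1/3 ->
  (cone A ⊕ ⊖ a) ⊗ inv A (cone A ⊕ ⊖ a) = cone A /\
  inv A (cone A ⊕ ⊖ a) ⊗ (cone A ⊕ ⊖ a) = cone A /\ N[inv A (cone A ⊕ ⊖ a)] <= 3/2.
Proof.
  intro Ha. destruct (inv_spec A _ (neumann A a ltac:(lra))) as [H1 H2].
  set (P := inv A (cone A ⊕ ⊖ a)) in *. split; [exact H1|]. split; [exact H2|].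
  assert (E : P = cone A ⊕ P ⊗ a).
  { rewrite mul_subr, cmul_1r in H2. rewrite <- H2, addNKr. reflexivity. }
  assert (N[P] <= 1 + N[P] * (1/3)).
  { rewrite E at 1. eapply Rle_trans. apply cnorm_triangle. pose proof (norm1 A).
    pose proof (cnorm_submult A P a). pose proof (norm_ge0 A P). nra. }
  lra.
Qed.
Lemma cay_alt (A : CStarAlg) (a : A) : N[a] <= 1/3 ->
  cay A a = (inv A (cone A ⊕ ⊖ a) ⊕ inv A (cone A ⊕ ⊖ a)) ⊕ ⊖ cone A.
Proof.
  intro Ha. destruct (inv_1m A a Ha) as [H1 _]. unfold cay.
  set (P := inv A (cone A ⊕ ⊖ a)) in *.
  rewrite mul_subl, cmul_1l in H1. apply sub_eq_swap in H1.
  rewrite cmul_addl, cmul_1l, H1, cadd_assoc. reflexivity.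
Qed.
Lemma cay_lip (A : CStarAlg) (a b : A) : N[a] <= 1/3 -> N[b] <= 1/3 ->
  N[cay A a ⊕ ⊖ cay A b] <= 9/2 * N[a ⊕ ⊖ b].
Proof.
  intros Ha Hb. rewrite (cay_alt A a Ha), (cay_alt A b Hb), sub_sub_same_r, sub_double.
  destruct (inv_1m A a Ha) as [Ha1 [Ha2 Ha3]]. destruct (inv_1m A b Hb) as [Hb1 [Hb2 Hb3]].
  rewrite (inv_diff A _ _ _ _ Ha2 Hb1), sub_sub_same, oppK, (cadd_comm A (⊖ b)), norm_double.
  pose proof (norm_mul3 A (inv A (cone A ⊕ ⊖ a)) (a ⊕ ⊖ b) (inv A (cone A ⊕ ⊖ b))).
  pose proof (norm_ge0 A (inv A (cone A ⊕ ⊖ a))). pose proof (norm_ge0 A (inv A (cone A ⊕ ⊖ b))).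
  pose proof (norm_ge0 A (a ⊕ ⊖ b)).
  assert (N[inv A (cone A ⊕ ⊖ a)] * N[a ⊕ ⊖ b] * N[inv A (cone A ⊕ ⊖ b)] <= 3/2 * N[a ⊕ ⊖ b] * (3/2)).
  { apply Rmult_le_compat; try nra. }
  lra.
Qed.
Lemma cay_unitary (A : CStarAlg) (a : A) : N[a] <= 1/3 -> cstar A a = ⊖ a -> unitary A (cay A a).
Proof.
  intros Ha Hs. destruct (inv_1m A a Ha) as [H1 [H2 _]].
  set (P := inv A (cone A ⊕ ⊖ a)) in *. set (Q := cstar A P).
  assert (Sm : cstar A (cone A ⊕ ⊖ a) = cone A ⊕ a) by (rewrite cstar_add, star1, starN, Hs, oppK; reflexivity).
  assert (Sp : cstar A (cone A ⊕ a) = cone A ⊕ ⊖ a) by (rewrite cstar_add, star1, Hs; reflexivity).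
  assert (Q1 : (cone A ⊕ a) ⊗ Q = cone A) by (unfold Q; rewrite <- Sm, <- cstar_mul, H2; apply star1).
  assert (Q2 : Q ⊗ (cone A ⊕ a) = cone A) by (unfold Q; rewrite <- Sm, <- cstar_mul, H1; apply star1).
  assert (CQ : a ⊗ Q = Q ⊗ a) by (apply comm_inv; auto).
  assert (CQ' : Q ⊗ (cone A ⊕ ⊖ a) = (cone A ⊕ ⊖ a) ⊗ Q).
  { rewrite mul_subr, mul_subl, cmul_1l, cmul_1r, CQ. reflexivity. }
  assert (Cs : cstar A (cay A a) = Q ⊗ (cone A ⊕ ⊖ a)) by (unfold cay; rewrite cstar_mul, Sp; reflexivity).
  split; rewrite Cs; unfold cay; fold P.
  - rewrite CQ', mul4, Q2, cmul_1l. exact H1.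
  - rewrite CQ', mul4, H2, cmul_1l. exact Q1.
Qed.
Lemma Rabs_le_inv (x t : R) : Rabs x <= t -> -t <= x <= t.
Proof. intro H. pose proof (Rle_abs x). pose proof (Rle_abs (-x)). rewrite Rabs_Ropp in H1. lra. Qed.
Fixpoint dot (n : nat) (x y : nat -> R) : R :=
  match n with O => 0 | S m => dot m x y + x m * y m end.
Lemma sumsq_ge0 n x : 0 <= sumsq n x.
Proof. induction n; cbn [sumsq dot]. lra. nra. Qed.
Lemma sumsq_ext n f g : (forall i, f i ^ 2 = g i ^ 2) -> sumsq n f = sumsq n g.
Proof. intro H. induction n; cbn [sumsq dot]; auto. rewrite IHn, H. reflexivity. Qed.
Lemma sumsq_scale n c x : sumsq n (fun i => c * x i) = c ^ 2 * sumsq n x.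
Proof. induction n; cbn [sumsq dot]. ring. rewrite IHn. ring. Qed.
Lemma sumsq_plus n u v : sumsq n (fun i => u i + v i) = sumsq n u + 2 * dot n u v + sumsq n v.
Proof. induction n; cbn [sumsq dot]. ring. rewrite IHn. ring. Qed.
Lemma sqrt_sq_le (X Y : R) : 0 <= Y -> X ^ 2 <= Y -> Rabs X <= sqrt Y.
Proof.
  intros H0 H. rewrite <- sqrt_Rsqr_abs. apply sqrt_le_1_alt. unfold Rsqr. simpl in H. lra.
Qed.
Lemma cauchy_schwarz n u v : Rabs (dot n u v) <= sqrt (sumsq n u) * sqrt (sumsq n v).
Proof.
  induction n; cbn [sumsq dot].
  - rewrite Rabs_R0, sqrt_0. lra.
  - pose proof (sumsq_ge0 n u) as Hu. pose proof (sumsq_ge0 n v) as Hv.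
    set (a := sqrt (sumsq n u)) in *. set (b := sqrt (sumsq n v)) in *.
    assert (Ea : sumsq n u = a * a) by (unfold a; rewrite sqrt_sqrt; auto).
    assert (Eb : sumsq n v = b * b) by (unfold b; rewrite sqrt_sqrt; auto).
    assert (a0 : 0 <= a) by apply sqrt_pos. assert (b0 : 0 <= b) by apply sqrt_pos.
    rewrite <- sqrt_mult by nra. apply sqrt_sq_le. nra.
    set (D := dot n u v) in *. set (p := u n). set (q := v n).
    rewrite Ea, Eb.
    assert (HD : D * D <= (a * b) * (a * b)).
    { apply Rabs_le_inv in IHn. nra. }
    assert (HD2 : 2 * D * p * q <= 2 * a * b * Rabs p * Rabs q).
    { assert (D * (p * q) <= Rabs D * Rabs (p * q)) by (rewrite <- Rabs_mult; apply Rle_abs).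
      rewrite Rabs_mult in H. pose proof (Rabs_pos p). pose proof (Rabs_pos q). pose proof (Rabs_pos D).
      assert (Rabs D * (Rabs p * Rabs q) <= a * b * (Rabs p * Rabs q)) by (apply Rmult_le_compat_r; nra).
      nra. }
    assert (Hp : Rabs p * Rabs p = p * p) by (rewrite <- Rabs_mult; apply Rabs_pos_eq; nra).
    assert (Hq : Rabs q * Rabs q = q * q) by (rewrite <- Rabs_mult; apply Rabs_pos_eq; nra).
    assert (H0 : 0 <= (a * Rabs q - b * Rabs p) ^ 2) by apply pow2_ge_0.
    assert (E1 : (a * Rabs q - b * Rabs p) ^ 2 = a * a * (Rabs q * Rabs q) + b * b * (Rabs p * Rabs p) - 2 * a * b * Rabs p * Rabs q) by ring.
    rewrite E1, Hp, Hq in H0.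
    replace ((D + p * q) ^ 2) with (D * D + 2 * D * p * q + p * p * (q * q)) by ring.
    replace ((a * a + p ^ 2) * (b * b + q ^ 2)) with ((a * b) * (a * b) + (a * a * (q * q) + b * b * (p * p)) + p * p * (q * q)) by ring.
    lra.
Qed.
Lemma minkowski n u v :
  sqrt (sumsq n (fun i => u i + v i)) <= sqrt (sumsq n u) + sqrt (sumsq n v).
Proof.
  rewrite sumsq_plus. pose proof (cauchy_schwarz n u v) as H.
  pose proof (sumsq_ge0 n u) as Hu. pose proof (sumsq_ge0 n v) as Hv.
  pose proof (sqrt_sqrt _ Hu). pose proof (sqrt_sqrt _ Hv).
  pose proof (sqrt_pos (sumsq n u)). pose proof (sqrt_pos (sumsq n v)).
  apply Rabs_le_inv in H.
  rewrite <- (sqrt_Rsqr (sqrt (sumsq n u) + sqrt (sumsq n v))) by lra.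
  apply sqrt_le_1_alt. unfold Rsqr. nra.
Qed.
Lemma edist_ge0 n x y : 0 <= edist n x y.
Proof. apply sqrt_pos. Qed.
Lemma edist_sym n x y : edist n x y = edist n y x.
Proof. unfold edist. f_equal. apply sumsq_ext. intro. ring. Qed.
Lemma edist_tri n x y z : edist n x z <= edist n x y + edist n y z.
Proof.
  unfold edist. rewrite (sumsq_ext n (fun i => x i - z i) (fun i => (x i - y i) + (y i - z i)))
    by (intro; ring).
  apply (minkowski n (fun i => x i - y i) (fun i => y i - z i)).
Qed.
Lemma edist_scale n c x y : edist n (fun i => c * x i) (fun i => c * y i) = Rabs c * edist n x y.
Proof.
  unfold edist. rewrite (sumsq_ext n _ (fun i => c * (x i - y i))) by (intro; ring).
  rewrite sumsq_scale, sqrt_mult by (try apply pow2_ge_0; apply sumsq_ge0).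
  f_equal. rewrite <- sqrt_Rsqr_abs. f_equal. unfold Rsqr. ring.
Qed.
Lemma left_inv_bound (A : CStarAlg) (Z a : A) : Z ⊗ (cone A ⊕ ⊖ a) = cone A -> N[Z] <= 1 + N[Z] * N[a].
Proof.
  intro H2. assert (E : Z = cone A ⊕ Z ⊗ a).
  { rewrite mul_subr, cmul_1r in H2. rewrite <- H2, addNKr. reflexivity. }
  rewrite E at 1. eapply Rle_trans. apply cnorm_triangle. pose proof (norm1 A).
  pose proof (cnorm_submult A Z a). lra.
Qed.
Lemma add_eq_sub (A : CStarAlg) (x y z : A) : x ⊕ y = z -> y = z ⊕ ⊖ x.
Proof. intro H. rewrite <- H, addKl. reflexivity. Qed.
Lemma double_sub (A : CStarAlg) (R : A) :
  (cone A ⊕ ⊖ R) ⊕ (cone A ⊕ ⊖ R) = (cone A ⊕ cone A) ⊕ ⊖ (R ⊕ R).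
Proof. rewrite add4, oppD. reflexivity. Qed.

Definition wf (A : CStarAlg) (u0 u : A) : A := cstar A u0 ⊗ u.
Definition Rf (A : CStarAlg) (u0 u : A) : A := inv A (cone A ⊕ wf A u0 u).
Definition kf (A : CStarAlg) (u0 u : A) : A := cone A ⊕ ⊖ (Rf A u0 u ⊕ Rf A u0 u).

Lemma w_unitary (A : CStarAlg) (u0 u : A) : unitary A u0 -> unitary A u -> unitary A (wf A u0 u).
Proof.
  intros [H1 H2] [H3 H4]. unfold wf. split.
  - rewrite cstar_mul, cstar_invol, mul4, H2, cmul_1l. exact H3.
  - rewrite cstar_mul, cstar_invol, mul4, H4, cmul_1l. exact H1.
Qed.
Lemma w_sub (A : CStarAlg) (u0 u u' : A) : unitary A u0 ->
  N[wf A u0 u ⊕ ⊖ wf A u0 u'] <= N[u ⊕ ⊖ u'].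
Proof.
  intros Hu0. unfold wf. rewrite <- mul_subr. eapply Rle_trans. apply cnorm_submult.
  destruct (norm_unitary A u0 Hu0) as [_ H]. pose proof (norm_ge0 A (u ⊕ ⊖ u')). nra.
Qed.
Lemma w_one (A : CStarAlg) (u0 : A) : unitary A u0 -> wf A u0 u0 = cone A.
Proof. intros [H _]. exact H. Qed.

Lemma R_props (A : CStarAlg) (u0 u : A) : unitary A u0 -> unitary A u -> N[u ⊕ ⊖ u0] <= 1/2 ->
  (cone A ⊕ wf A u0 u) ⊗ Rf A u0 u = cone A /\ Rf A u0 u ⊗ (cone A ⊕ wf A u0 u) = cone A /\
  N[Rf A u0 u] <= 2/3.
Proof.
  intros H0 H1 Hd. set (w := wf A u0 u).
  assert (Hw : N[cone A ⊕ ⊖ w] <= 1/2).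
  { unfold w. rewrite <- (w_one A u0 H0) at 1. rewrite norm_subC. eapply Rle_trans. apply w_sub; auto. exact Hd. }
  set (a := sc A (1/2) (cone A ⊕ ⊖ w)).
  assert (Ha : N[a] <= 1/4).
  { unfold a. rewrite norm_sc, Rabs_pos_eq by lra. lra. }
  assert (E : cone A ⊕ w = sc A 2 (cone A ⊕ ⊖ a)).
  { unfold a. rewrite sc_sub, sc_mul. replace (2 * (1/2)) with 1 by field. rewrite sc_1.
    replace 2 with (1 + 1) by ring. rewrite <- sc_addl, sc_1, sub_sub_same, oppK. reflexivity. }
  destruct (neumann A a ltac:(lra)) as [Y [HY1 HY2]].
  assert (Hinv : invertible A (cone A ⊕ w)).
  { exists (sc A (1/2) Y). rewrite E, sc_mull, sc_mulr, sc_mull, sc_mulr, sc_mul, sc_mul, HY1, HY2.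
    replace (1/2 * 2) with 1 by field. replace (2 * (1/2)) with 1 by field. rewrite sc_1. split; reflexivity. }
  destruct (inv_spec A _ Hinv) as [HR1 HR2]. fold (Rf A u0 u) in HR1, HR2. fold w in HR1, HR2.
  split; [exact HR1|]. split; [exact HR2|].
  assert (HZ : sc A 2 (Rf A u0 u) ⊗ (cone A ⊕ ⊖ a) = cone A).
  { rewrite sc_mull, <- sc_mulr, <- E. exact HR2. }
  apply left_inv_bound in HZ. rewrite norm_sc, Rabs_pos_eq in HZ by lra.
  pose proof (norm_ge0 A (Rf A u0 u)). pose proof (norm_ge0 A a).
  assert (2 * N[Rf A u0 u] * N[a] <= 2 * N[Rf A u0 u] * (1/4)) by (apply Rmult_le_compat_l; lra).
  lra.
Qed.

Lemma k_props (A : CStarAlg) (u0 u : A) : unitary A u0 -> unitary A u -> N[u ⊕ ⊖ u0] <= 1/2 ->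
  N[kf A u0 u] <= 2/3 * N[u ⊕ ⊖ u0] /\ N[kf A u0 u] <= 1/3 /\
  cstar A (kf A u0 u) = ⊖ kf A u0 u /\ cay A (kf A u0 u) = wf A u0 u.
Proof.
  intros H0 H1 Hd. destruct (R_props A u0 u H0 H1 Hd) as [HR1 [HR2 HRn]].
  set (w := wf A u0 u) in *. set (R := Rf A u0 u) in *.
  assert (Hwr : w ⊗ R = cone A ⊕ ⊖ R).
  { apply add_eq_sub. rewrite <- HR1, cmul_addl, cmul_1l. reflexivity. }
  assert (Ek : kf A u0 u = (w ⊕ ⊖ cone A) ⊗ R).
  { unfold kf. fold R. rewrite mul_subl, cmul_1l, Hwr, oppD, cadd_assoc. reflexivity. }
  assert (Hk1 : N[kf A u0 u] <= 2/3 * N[u ⊕ ⊖ u0]).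
  { rewrite Ek. eapply Rle_trans. apply cnorm_submult.
    assert (N[w ⊕ ⊖ cone A] <= N[u ⊕ ⊖ u0]).
    { unfold w. rewrite <- (w_one A u0 H0). apply w_sub; auto. }
    pose proof (norm_ge0 A R). pose proof (norm_ge0 A (w ⊕ ⊖ cone A)). nra. }
  assert (Hk2 : N[kf A u0 u] <= 1/3) by lra.
  split; [exact Hk1|]. split; [exact Hk2|]. split.
  -
    assert (CW : w ⊗ R = R ⊗ w) by (apply comm_inv; auto).
    destruct (w_unitary A u0 u H0 H1) as [Wu1 Wu2]. fold w in Wu1, Wu2.
    assert (Rs : R ⊗ w = cstar A R).
    { apply (inv_uniq A _ (cone A ⊕ cstar A w)).
      - rewrite cmul_addr, cmul_1r, <- cmul_assoc, Wu2, cmul_1r, <- CW, cadd_comm. rewrite <- HR1. rewrite cmul_addl, cmul_1l. reflexivity.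
      - rewrite <- star1, <- cstar_add, <- cstar_mul, HR2. reflexivity. }
    assert (HRR : cstar A R = cone A ⊕ ⊖ R).
    { apply add_eq_sub. rewrite <- Rs, <- CW, Hwr, cadd_comm. apply addNKr. }
    unfold kf. fold R. rewrite cstar_add, star1, starN, cstar_add, HRR, double_sub, oppB, oppB.
    rewrite cadd_assoc, sub_sub_same. reflexivity.
  -
    destruct (inv_1m A _ Hk2) as [P1 [P2 _]].
    unfold cay. set (P := inv A (cone A ⊕ ⊖ kf A u0 u)) in *.
    assert (E2 : cone A ⊕ kf A u0 u = w ⊗ (cone A ⊕ ⊖ kf A u0 u)).
    { unfold kf. fold R. rewrite sub_sub_cancel, cmul_addr, Hwr, double_sub, cadd_assoc. reflexivity. }
    rewrite E2, <- cmul_assoc, P1, cmul_1r. reflexivity.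
Qed.

Lemma k_lip (A : CStarAlg) (u0 u u' : A) : unitary A u0 -> unitary A u -> unitary A u' ->
  N[u ⊕ ⊖ u0] <= 1/2 -> N[u' ⊕ ⊖ u0] <= 1/2 ->
  N[kf A u0 u ⊕ ⊖ kf A u0 u'] <= 8/9 * N[u ⊕ ⊖ u'].
Proof.
  intros H0 H1 H2 Hd1 Hd2.
  destruct (R_props A u0 u H0 H1 Hd1) as [HR1 [HR2 HRn]].
  destruct (R_props A u0 u' H0 H2 Hd2) as [HS1 [HS2 HSn]].
  unfold kf. rewrite sub_sub_same, oppK, cadd_comm, sub_double, norm_double.
  rewrite (inv_diff A _ _ _ _ HS2 HR1), sub_sub_same.
  pose proof (norm_mul3 A (Rf A u0 u') (wf A u0 u ⊕ ⊖ wf A u0 u') (Rf A u0 u)).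
  pose proof (w_sub A u0 u u' H0).
  pose proof (norm_ge0 A (Rf A u0 u')). pose proof (norm_ge0 A (Rf A u0 u)).
  pose proof (norm_ge0 A (wf A u0 u ⊕ ⊖ wf A u0 u')).
  assert (N[Rf A u0 u'] * N[wf A u0 u ⊕ ⊖ wf A u0 u'] * N[Rf A u0 u] <= 2/3 * N[u ⊕ ⊖ u'] * (2/3)).
  { apply Rmult_le_compat; try nra. }
  lra.
Qed.
Definition e0 : nat -> R := fun i => if Nat.eqb i 0 then 1 else 0.
Definition zr : nat -> R := fun _ => 0.
Definition nrm (n : nat) (y : nat -> R) : R := sqrt (sumsq n y).
Definition xhat (n : nat) (y : nat -> R) : nat -> R := fun i => y i / nrm n y.
Definition Ff (A : CStarAlg) (alpha0 : (nat -> R) -> A) (n : nat) (y : nat -> R) : A :=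
  sc A (nrm n y) (kf A (alpha0 e0) (alpha0 (xhat n y))).

Lemma sumsq_e0 m : sumsq (S m) e0 = 1.
Proof. induction m. simpl. unfold e0. simpl. ring. cbn [sumsq] in *. rewrite IHm. unfold e0. simpl. ring. Qed.
Lemma e0_sphere n : (1 <= n)%nat -> in_sphere n e0.
Proof. intro H. destruct n. lia. apply sumsq_e0. Qed.
Lemma edist_zr n y : edist n y zr = nrm n y.
Proof. unfold edist, nrm, zr. f_equal. apply sumsq_ext. intro. ring. Qed.
Lemma nrm_ge0 n y : 0 <= nrm n y.
Proof. apply sqrt_pos. Qed.
Lemma nrm_diff n y y' : Rabs (nrm n y - nrm n y') <= edist n y y'.
Proof.
  rewrite <- !edist_zr. pose proof (edist_tri n y y' zr). pose proof (edist_tri n y' y zr).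
  rewrite (edist_sym n y' y) in H0. apply Rabs_le. lra.
Qed.
Lemma sphere_nrm n x : in_sphere n x -> nrm n x = 1.
Proof. intro H. unfold nrm. rewrite H. apply sqrt_1. Qed.
Lemma sphere_e0_dist n x : (1 <= n)%nat -> in_sphere n x -> edist n x e0 <= 2.
Proof.
  intros Hn Hx. pose proof (edist_tri n x zr e0). rewrite edist_zr, sphere_nrm in H by auto.
  rewrite (edist_sym n zr e0), edist_zr, sphere_nrm in H by (apply e0_sphere; auto). lra.
Qed.
Lemma disk_nrm n y : in_disk n y -> nrm n y <= 1.
Proof. intro H. unfold nrm. rewrite <- sqrt_1. apply sqrt_le_1_alt. exact H. Qed.
Lemma xhat_sphere n y : nrm n y <> 0 -> in_sphere n (xhat n y).
Proof.
  intro H. unfold in_sphere, xhat.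
  rewrite (sumsq_ext n _ (fun i => / nrm n y * y i)) by (intro; unfold Rdiv; ring).
  rewrite sumsq_scale. pose proof (sqrt_sqrt (sumsq n y) (sumsq_ge0 n y)). fold (nrm n y) in H0.
  rewrite <- H0. field. exact H.
Qed.
Lemma xhat_scale n y : nrm n y <> 0 -> (fun i => nrm n y * xhat n y i) = y.
Proof. intro H. apply functional_extensionality. intro i. unfold xhat. field. exact H. Qed.
Lemma radial n y y' : nrm n y <> 0 -> nrm n y' <> 0 ->
  nrm n y' * edist n (xhat n y) (xhat n y') <= 2 * edist n y y'.
Proof.
  intros H H'. pose proof (nrm_ge0 n y'). pose proof (nrm_ge0 n y).
  set (r := nrm n y) in *. set (r' := nrm n y') in *.
  rewrite <- (Rabs_pos_eq r') at 1 by auto. rewrite <- edist_scale.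
  pose proof (xhat_scale n y' H') as X'. pose proof (xhat_scale n y H) as X. fold r in X. fold r' in X'.
  rewrite X'.
  pose proof (edist_tri n (fun i => r' * xhat n y i) (fun i => r * xhat n y i) y') as T.
  assert (E : edist n (fun i => r' * xhat n y i) (fun i => r * xhat n y i) = Rabs (r' - r)).
  { unfold edist. rewrite (sumsq_ext n _ (fun i => (r' - r) * xhat n y i)) by (intro; ring).
    rewrite sumsq_scale, (xhat_sphere n y H). rewrite <- sqrt_Rsqr_abs. f_equal. unfold Rsqr. ring. }
  rewrite E, X in T. pose proof (nrm_diff n y y') as ND. fold r r' in ND.
  rewrite <- Rabs_Ropp in ND. replace (- (r - r')) with (r' - r) in ND by ring. lra.
Qed.
Lemma unitary_mul (A : CStarAlg) (u v : A) : unitary A u -> unitary A v -> unitary A (u ⊗ v).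
Proof.
  intros [H1 H2] [H3 H4]. split.
  - rewrite cstar_mul, mul4, H1, cmul_1l. exact H3.
  - rewrite cstar_mul, mul4, H4, cmul_1l. exact H2.
Qed.
Theorem mainTheorem6 :
  exists C : R, 0 < C /\
  forall (A : CStarAlg) (n : nat) (lam : R) (alpha0 : (nat -> R) -> A),
    (1 <= n)%nat ->
    0 < lam ->
    (* alpha0 : S^{n-1} -> U(A) *)
    (forall x, in_sphere n x -> unitary A (alpha0 x)) ->
    (* alpha0 is lam-Lipschitz *)
    (forall x y, in_sphere n x -> in_sphere n y ->
       cdist A (alpha0 x) (alpha0 y) <= lam * edist n x y) ->
    (* diam alpha0(S^{n-1}) <= 1/2 *)
    (forall x y, in_sphere n x -> in_sphere n y ->
       cdist A (alpha0 x) (alpha0 y) <= 1 / 2) ->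
    exists alpha : (nat -> R) -> A,
      (forall x, in_disk n x -> unitary A (alpha x)) /\
      (forall x, in_sphere n x -> alpha x = alpha0 x) /\
      (forall x y, in_disk n x -> in_disk n y ->
         cdist A (alpha x) (alpha y) <= C * lam * edist n x y).
Proof.
  exists 18. split; [lra|].
  intros A n lam alpha0 Hn Hlam Hun Hlip Hdiam.
  unfold cdist in Hlip, Hdiam.
  pose proof (e0_sphere n Hn) as Hs0.
  set (u0 := alpha0 e0).
  assert (Hu0 : unitary A u0) by (apply Hun; auto).
  assert (Hd1 : forall x, in_sphere n x -> N[alpha0 x ⊕ ⊖ u0] <= 1/2) by (intros; apply Hdiam; auto).
  assert (Hd2 : forall x, in_sphere n x -> N[alpha0 x ⊕ ⊖ u0] <= 2 * lam).
  { intros x Hx. eapply Rle_trans. apply Hlip; auto. pose proof (sphere_e0_dist n x Hn Hx).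
    apply Rmult_le_compat_l with (r := lam) in H; lra. }
  assert (Hk : forall x, in_sphere n x ->
     N[kf A u0 (alpha0 x)] <= 4/3 * lam /\ N[kf A u0 (alpha0 x)] <= 1/3 /\
     cstar A (kf A u0 (alpha0 x)) = ⊖ kf A u0 (alpha0 x) /\ cay A (kf A u0 (alpha0 x)) = wf A u0 (alpha0 x)).
  { intros x Hx. destruct (k_props A u0 (alpha0 x) Hu0 (Hun x Hx) (Hd1 x Hx)) as [K1 [K2 [K3 K4]]].
    pose proof (Hd2 x Hx). split; [lra|]. auto. }
  assert (Hkl : forall x x', in_sphere n x -> in_sphere n x' ->
     N[kf A u0 (alpha0 x) ⊕ ⊖ kf A u0 (alpha0 x')] <= 8/9 * lam * edist n x x').
  { intros x x' Hx Hx'. eapply Rle_trans. apply k_lip; auto.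
    pose proof (Hlip x x' Hx Hx'). lra. }
  set (F := Ff A alpha0 n).
  assert (HF0 : forall y, nrm n y = 0 -> F y = czero A).
  { intros y Hy. unfold F, Ff. rewrite Hy. apply sc_0. }
  assert (HF : forall y, in_disk n y -> N[F y] <= 1/3 /\ cstar A (F y) = ⊖ F y).
  { intros y Hy. destruct (Req_dec (nrm n y) 0) as [Hr|Hr].
    - rewrite (HF0 y Hr), norm0, star0, opp0. split; [lra|reflexivity].
    - destruct (Hk _ (xhat_sphere n y Hr)) as [K1 [K2 [K3 K4]]].
      pose proof (disk_nrm n y Hy). pose proof (nrm_ge0 n y).
      unfold F, Ff. fold u0. rewrite norm_sc, sc_star, K3, sc_opp, Rabs_pos_eq by auto.
      split; [|reflexivity]. pose proof (norm_ge0 A (kf A u0 (alpha0 (xhat n y)))). nra. }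
  assert (HFz : forall y y', nrm n y = 0 -> in_disk n y' -> N[F y ⊕ ⊖ F y'] <= 4 * lam * edist n y y').
  { intros y y' Hr Hy'. rewrite (HF0 y Hr), cadd_0, normN.
    pose proof (edist_ge0 n y y'). pose proof (nrm_diff n y y') as ND. rewrite Hr in ND.
    replace (0 - nrm n y') with (- nrm n y') in ND by ring. rewrite Rabs_Ropp in ND.
    pose proof (nrm_ge0 n y'). rewrite Rabs_pos_eq in ND by auto.
    destruct (Req_dec (nrm n y') 0) as [Hr'|Hr'].
    - rewrite (HF0 y' Hr'), norm0. nra.
    - destruct (Hk _ (xhat_sphere n y' Hr')) as [K1 _].
      unfold F, Ff. fold u0. rewrite norm_sc, Rabs_pos_eq by auto.
      pose proof (norm_ge0 A (kf A u0 (alpha0 (xhat n y')))).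
      assert (nrm n y' * N[kf A u0 (alpha0 (xhat n y'))] <= edist n y y' * (4/3 * lam)) by (apply Rmult_le_compat; auto).
      nra. }
  assert (HFl : forall y y', in_disk n y -> in_disk n y' -> N[F y ⊕ ⊖ F y'] <= 4 * lam * edist n y y').
  { intros y y' Hy Hy'.
    destruct (Req_dec (nrm n y) 0) as [Hr|Hr]. { apply HFz; auto. }
    destruct (Req_dec (nrm n y') 0) as [Hr'|Hr'].
    { rewrite norm_subC, edist_sym. apply HFz; auto. }
    pose proof (xhat_sphere n y Hr) as Sx. pose proof (xhat_sphere n y' Hr') as Sx'.
    destruct (Hk _ Sx) as [K1 _].
    pose proof (Hkl _ _ Sx Sx') as KL. pose proof (radial n y y' Hr Hr') as RD.
    pose proof (nrm_diff n y y') as ND. pose proof (nrm_ge0 n y'). pose proof (edist_ge0 n y y').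
    pose proof (edist_ge0 n (xhat n y) (xhat n y')).
    unfold F, Ff. fold u0.
    set (r := nrm n y) in *. set (r' := nrm n y') in *.
    set (k := kf A u0 (alpha0 (xhat n y))) in *. set (k' := kf A u0 (alpha0 (xhat n y'))) in *.
    assert (E : sc A r k ⊕ ⊖ sc A r' k' = sc A (r - r') k ⊕ sc A r' (k ⊕ ⊖ k')).
    { rewrite sc_sub, cadd_assoc, sc_addl. replace (r - r' + r') with r by ring. reflexivity. }
    rewrite E. eapply Rle_trans. apply cnorm_triangle. rewrite !norm_sc, (Rabs_pos_eq r') by auto.
    pose proof (norm_ge0 A k). pose proof (norm_ge0 A (k ⊕ ⊖ k')). pose proof (Rabs_pos (r - r')).
    assert (Rabs (r - r') * N[k] <= edist n y y' * (4/3 * lam)) by (apply Rmult_le_compat; auto).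
    assert (r' * N[k ⊕ ⊖ k'] <= r' * (8/9 * lam * edist n (xhat n y) (xhat n y'))) by (apply Rmult_le_compat_l; auto).
    assert (r' * (8/9 * lam * edist n (xhat n y) (xhat n y')) = 8/9 * lam * (r' * edist n (xhat n y) (xhat n y'))) by ring.
    assert (8/9 * lam * (r' * edist n (xhat n y) (xhat n y')) <= 8/9 * lam * (2 * edist n y y')) by (apply Rmult_le_compat_l; lra).
    nra. }
  exists (fun y => u0 ⊗ cay A (F y)). split; [|split].
  - intros y Hy. destruct (HF y Hy) as [F1 F2]. apply unitary_mul; auto. apply cay_unitary; auto.
  - intros y Hy. pose proof (sphere_nrm n y Hy) as H1.
    assert (Xy : xhat n y = y).
    { apply functional_extensionality. intro i. unfold xhat. rewrite H1. field. }
    assert (EF : F y = kf A u0 (alpha0 y)).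
    { unfold F, Ff. rewrite H1, Xy. apply sc_1. }
    rewrite EF. destruct (Hk y Hy) as [_ [_ [_ K4]]]. rewrite K4. unfold wf.
    rewrite cmul_assoc. destruct Hu0 as [_ U2]. rewrite U2. apply cmul_1l.
  - intros y y' Hy Hy'. unfold cdist. rewrite <- mul_subr.
    eapply Rle_trans. apply cnorm_submult.
    destruct (norm_unitary A u0 Hu0) as [U1 _].
    destruct (HF y Hy) as [F1 _]. destruct (HF y' Hy') as [F1' _].
    pose proof (cay_lip A (F y) (F y') F1 F1'). pose proof (HFl y y' Hy Hy').
    pose proof (norm_ge0 A u0). pose proof (norm_ge0 A (cay A (F y) ⊕ ⊖ cay A (F y'))).
    assert (N[u0] * N[cay A (F y) ⊕ ⊖ cay A (F y')] <= 1 * (9/2 * (4 * lam * edist n y y'))).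
    { apply Rmult_le_compat; auto. lra. }
    lra.
Qed.
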